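(* Let $\Omega\subset\mathbb R^d$ be a bounded Borel set, $f:\Omega\to[0,\infty)$ with $\int_\Omega f=1$, $p\ge1$, $x_1,\dots,x_k\in\Omega$, and $h_1,\dots,h_k:[0,1]\to[0,\infty)$ strictly increasing. Then every equilibrium is a Pareto optimum.
   Context: A partition of $\Omega$ is a family of Borel sets pairwise disjoint up to $f$-negligible sets whose union has full $f\,dx$-measure. For a partition $(B_i)_{i=1}^k$, $C(x,(B_i)_i)=\sum_{i=1}^k[|x-x_i|^p+h_i(\int_{B_i}f\,dx)]\mathbf 1_{B_i}(x)$. A partition $(A_i)$ is an equilibrium if, with $c_j=\int_{A_j}f$, for every $i$: $A_i=\{x:|x-x_i|^p+h_i(c_i)<|x-x_j|^p+h_j(c_j)\ \forall j\ne i\}$ up to $f$-negligible sets. A partition $(A_i)$ is a Pareto optimum if there is no partition $(B_i)_{i=1}^k$ with $C(x,(B_i)_i)\le C(x,(A_i)_i)$ for $f$-a.e. $x$ and strict inequality on a set of positive $f\,dx$-measure. *)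

(* Defs.v *)
From HB Require Import structures.
From mathcomp Require Import all_boot all_order all_algebra.
From mathcomp Require Import all_classical all_reals all_analysis.
Set Implicit Arguments.
Unset Strict Implicit.
Unset Printing Implicit Defensive.
Import Order.TTheory GRing.Theory Num.Theory.
Local Open Scope classical_set_scope.
Local Open Scope ring_scope.

(* R^d is represented by d.-tuple R, equipped with the product sigma-algebra
   from measurable_structure (= Borel sigma-algebra of R^d). *)

(* Lebesgue integral on R^d of a function g : R^d -> \bar R, computed as the
   iterated one-dimensional Lebesgue integral (Tonelli); for nonnegative
   measurable g this is the d-dimensional Lebesgue integral. *)
Fixpoint leb_int (R : realType) (n : nat) : (n.-tuple R -> \bar R) -> \bar R :=
  match n return (n.-tuple R -> \bar R) -> \bar R with
  | 0 => fun g => g [tuple]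
  | m.+1 => fun g =>
      (\int[@lebesgue_measure R]_x leb_int (fun t : m.-tuple R => g (cons_tuple x t)))%E
  end.

Definition eucl_dist (R : realType) (d : nat) (x y : d.-tuple R) : R :=
  Num.sqrt (\sum_(i < d) (tnth x i - tnth y i) ^+ 2).

Definition fmeas (R : realType) (d : nat) (Omega : set (d.-tuple R))
  (f : d.-tuple R -> R) (A : set (d.-tuple R)) : \bar R :=
  leb_int (fun x => ((f x)%:E * (\1_(A `&` Omega) x)%:E)%E).

Definition fnegligible (R : realType) (d : nat) (Omega : set (d.-tuple R))
  (f : d.-tuple R -> R) (N : set (d.-tuple R)) : Prop :=
  exists N' : set (d.-tuple R),
    measurable N' /\ N `&` Omega `<=` N' /\ fmeas Omega f N' = 0%E.

Definition is_partition (R : realType) (d k : nat) (Omega : set (d.-tuple R))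
  (f : d.-tuple R -> R) (B : 'I_k -> set (d.-tuple R)) : Prop :=
  (forall i, measurable (B i) /\ B i `<=` Omega) /\
  (forall i j, i != j -> fnegligible Omega f (B i `&` B j)) /\
  fnegligible Omega f (Omega `\` \bigcup_(i in [set: 'I_k]) B i).

(* Mass c_i = \int_{B_i} f dx (a finite real number for partitions). *)
Definition mass (R : realType) (d : nat) (Omega : set (d.-tuple R))
  (f : d.-tuple R -> R) (B : set (d.-tuple R)) : R :=
  fine (fmeas Omega f B).

Definition cost (R : realType) (d k : nat) (Omega : set (d.-tuple R))
  (f : d.-tuple R -> R) (p : R) (xs : 'I_k -> d.-tuple R) (h : 'I_k -> R -> R)
  (B : 'I_k -> set (d.-tuple R)) (x : d.-tuple R) : R :=
  \sum_(i < k) ((eucl_dist x (xs i)) `^ p + h i (mass Omega f (B i))) * \1_(B i) x.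

Definition symdiff (T : Type) (A B : set T) : set T := (A `\` B) `|` (B `\` A).

Definition is_equilibrium (R : realType) (d k : nat) (Omega : set (d.-tuple R))
  (f : d.-tuple R -> R) (p : R) (xs : 'I_k -> d.-tuple R) (h : 'I_k -> R -> R)
  (A : 'I_k -> set (d.-tuple R)) : Prop :=
  is_partition Omega f A /\
  forall i : 'I_k,
    fnegligible Omega f
      (symdiff (A i)
         [set x | forall j : 'I_k, j != i ->
            (eucl_dist x (xs i)) `^ p + h i (mass Omega f (A i)) <
            (eucl_dist x (xs j)) `^ p + h j (mass Omega f (A j))]).

Definition is_pareto_optimum (R : realType) (d k : nat) (Omega : set (d.-tuple R))
  (f : d.-tuple R -> R) (p : R) (xs : 'I_k -> d.-tuple R) (h : 'I_k -> R -> R)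
  (A : 'I_k -> set (d.-tuple R)) : Prop :=
  is_partition Omega f A /\
  ~ exists B : 'I_k -> set (d.-tuple R),
      is_partition Omega f B /\
      fnegligible Omega f
        [set x | ~ (cost Omega f p xs h B x <= cost Omega f p xs h A x)] /\
      ~ fnegligible Omega f
        [set x | cost Omega f p xs h B x < cost Omega f p xs h A x].

(* Main.v *)
Require Import Defs.
From HB Require Import structures.
From mathcomp Require Import all_boot all_order all_algebra.
From mathcomp Require Import all_classical all_reals all_analysis.
From mathcomp Require Import measurable_realfun.
Import Order.TTheory GRing.Theory Num.Theory.
Import numFieldNormedType.Exports.
Local Open Scope classical_set_scope.
Local Open Scope ring_scope.

Section LI.
Variable R : realType.
Local Open Scope ereal_scope.

Lemma leb_int_ge0 n (g : n.-tuple R -> \bar R) :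
  (forall t, 0 <= g t) -> 0 <= leb_int g.
Proof.
elim: n g => [|n IH] g g0 /=; first exact: g0.
by apply: integral_ge0 => x _; apply: IH.
Qed.

Lemma leb_int_meas n : forall d (X : measurableType d) (G : X * n.-tuple R -> \bar R),
  measurable_fun setT G -> (forall z, 0 <= G z) ->
  measurable_fun setT (fun x => leb_int (fun t => G (x, t))).
Proof.
elim: n => [|n IH] d X G mG G0 /=.
  apply: (measurableT_comp mG).
  exact: measurable_fun_pair.
pose G' := fun z : (X * R) * n.-tuple R => G (z.1.1, cons_tuple z.1.2 z.2).
have mG' : measurable_fun setT G'.
  apply: (measurableT_comp mG).
  apply: measurable_fun_pair.
    exact: (measurableT_comp measurable_fst measurable_fst).
  apply: measurable_cons.
    exact: (measurableT_comp measurable_snd measurable_fst).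
  exact: measurable_snd.
have := IH _ _ G' mG' (fun z => G0 _).
move=> mF.
have H := (@measurable_fun_fubini_tonelli_F _ _ X _ R (@lebesgue_measure R)
  (fun xy => leb_int (fun t => G' (xy, t))) mF (fun z => @leb_int_ge0 _ _ (fun t => G0 _))).
rewrite /fubini_F /G' /= in H. exact H.
Qed.


Lemma measurable_cons_at n (x : R) :
  measurable_fun setT (fun t : n.-tuple R => cons_tuple x t).
Proof. exact: measurable_cons. Qed.

Lemma leb_intD n (g1 g2 : n.-tuple R -> \bar R) :
  measurable_fun setT g1 -> measurable_fun setT g2 ->
  (forall t, 0 <= g1 t) -> (forall t, 0 <= g2 t) ->
  leb_int (fun t => g1 t + g2 t) = leb_int g1 + leb_int g2.
Proof.
elim: n g1 g2 => [|n IH] g1 g2 m1 m2 p1 p2 //=.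
transitivity (\int[@lebesgue_measure R]_x (leb_int (fun t => g1 (cons_tuple x t))
   + leb_int (fun t => g2 (cons_tuple x t)))).
  apply: eq_integral => x _; apply: IH => //.
  - exact: (measurableT_comp m1 (measurable_cons_at _ _)).
  - exact: (measurableT_comp m2 (measurable_cons_at _ _)).
apply: ge0_integralD => //.
- by move=> x _; apply: leb_int_ge0.
- pose G := fun z : R * n.-tuple R => g1 (cons_tuple z.1 z.2).
  have mG : measurable_fun setT G.
    apply: (measurableT_comp m1); apply: measurable_cons => //.
  exact: (@leb_int_meas n _ _ G mG (fun z => p1 _)).
- by move=> x _; apply: leb_int_ge0.
- pose G := fun z : R * n.-tuple R => g2 (cons_tuple z.1 z.2).
  have mG : measurable_fun setT G.
    apply: (measurableT_comp m2); apply: measurable_cons => //.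
  exact: (@leb_int_meas n _ _ G mG (fun z => p2 _)).
Qed.

Lemma leb_int0 n : leb_int (fun _ : n.-tuple R => 0) = 0.
Proof.
elim: n => [|n IH] //=.
under eq_integral => x _ do rewrite IH.
exact: integral0.
Qed.

End LI.


Set Implicit Arguments.
Section MU.
Variables (R : realType) (d : nat) (Omega : set (d.-tuple R)) (f : d.-tuple R -> R).
Hypothesis mO : measurable Omega.
Hypothesis mf : measurable_fun Omega f.
Hypothesis f0 : forall x, Omega x -> (0 <= f x)%R.
Local Open Scope ereal_scope.

Let gi (A : set (d.-tuple R)) x := ((f x)%:E * (\1_(A `&` Omega) x)%:E).
Let mu A := fmeas Omega f A.

Lemma gi_ge0 A x : 0 <= gi A x.
Proof.
rewrite /gi indicE; have [[xA xO]|nx] := pselect ((A `&` Omega) x).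
  by rewrite mem_set // mule_ge0 // lee_fin f0.
by rewrite memNset // mule0.
Qed.

Lemma gi_meas A : measurable A -> measurable_fun setT (gi A).
Proof.
move=> mA.
have -> : gi A = EFin \o (fun x => (f \_ Omega) x * \1_(A `&` Omega) x)%R.
  apply/funext => x; rewrite /gi /= indicE.
  have [[xA xO]|nx] := pselect ((A `&` Omega) x).
    by rewrite mem_set // patchE mem_set.
  by rewrite memNset // !mulr0 mule0.
apply/measurable_EFinP; apply: measurable_funM.
  exact/(measurable_restrictT _ _).1.
by apply: measurable_indic; apply: measurableI.
Qed.

Lemma mu_ge0 A : 0 <= mu A.
Proof. by apply: leb_int_ge0 => t; apply: gi_ge0. Qed.

Lemma mu0 : mu set0 = 0.
Proof.
rewrite /mu /fmeas -[RHS](@leb_int0 R d); congr leb_int; apply/funext => x.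
by rewrite set0I indicE in_set0 mule0.
Qed.

Lemma muU A B : measurable A -> measurable B -> A `&` B = set0 ->
  mu (A `|` B) = mu A + mu B.
Proof.
move=> mA mB AB0.
rewrite /mu /fmeas -leb_intD; [|exact: gi_meas|exact: gi_meas|exact: gi_ge0|exact: gi_ge0].
congr leb_int; apply/funext => x; rewrite !indicE.
have [hA|nxA] := pselect ((A `&` Omega) x).
  have [xA xO] := hA.
  have nB : ~ (B `&` Omega) x.
    by move=> [xB _]; have : (A `&` B) x by []; rewrite AB0.
  by rewrite (mem_set hA) (memNset nB) (mem_set (_ : ((A `|` B) `&` Omega) x)) /= ?mule0 ?adde0 //; split => //; left.
have [hB|nxB] := pselect ((B `&` Omega) x).
  have [xB xO] := hB.
  by rewrite (mem_set (_ : ((A `|` B) `&` Omega) x)) ?(memNset nxA) ?(mem_set hB) /= ?mule0 ?add0e //; split => //; right.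
rewrite !memNset ?mule0 ?adde0 //.
by move=> [[xA|xB] xO]; [apply: nxA|apply: nxB].
Qed.

Lemma mu_le A B : measurable A -> measurable B -> A `<=` B -> mu A <= mu B.
Proof.
move=> mA mB AB.
have -> : B = A `|` (B `\` A).
  by apply/seteqP; split => x; [move=> Bx; have [|] := pselect (A x); [left|right]|move=> [/AB|[]]].
rewrite muU //; first by rewrite leeDl // mu_ge0.
  exact: measurableD.
by apply/seteqP; split => x // [? []].
Qed.

Lemma mu_subadd A B : measurable A -> measurable B -> mu (A `|` B) <= mu A + mu B.
Proof.
move=> mA mB.
have -> : A `|` B = A `|` (B `\` A).
  apply/seteqP; split => x.
    case=> [Ax|Bx]; first by left.
    by have [Ax|nAx] := pselect (A x); [left|right].
  by case=> [Ax|[Bx _]]; [left|right].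
rewrite muU //.
- apply: leeD2l; apply: mu_le => //; first exact: measurableD.
- by apply: measurableD.
- by apply/seteqP; split => x // [? []].
Qed.


Let fneg := fnegligible Omega f.

Lemma fneg0 : fneg set0.
Proof. by exists set0; split => //; split; [move=> x []|exact: mu0]. Qed.

Lemma mu_eq0 N : measurable N -> mu N <= 0 -> mu N = 0.
Proof. by move=> mN h; apply/eqP; rewrite eq_le h mu_ge0. Qed.

Lemma fnegU X Y : fneg X -> fneg Y -> fneg (X `|` Y).
Proof.
move=> [N1 [m1 [s1 z1]]] [N2 [m2 [s2 z2]]].
exists (N1 `|` N2); split; first exact: measurableU.
split.
  by move=> x [[Xx|Yx] Ox]; [left; apply: s1|right; apply: s2].
apply: mu_eq0; first exact: measurableU.
by apply: le_trans (mu_subadd m1 m2) _; rewrite /mu z1 z2 adde0.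
Qed.

Lemma fneg_sub X Y : X `&` Omega `<=` Y -> fneg Y -> fneg X.
Proof.
move=> XY [N [mN [sN zN]]]; exists N; split => //; split => //.
by move=> x [Xx Ox]; apply: sN; split => //; apply: XY.
Qed.

Lemma fneg_seq (I : eqType) (s : seq I) (F : I -> set (d.-tuple R)) :
  (forall i, i \in s -> fneg (F i)) -> fneg [set x | exists2 i, i \in s & F i x].
Proof.
elim: s => [|a s IH] H.
  by apply: fneg_sub fneg0 => x [[i]].
apply: (@fneg_sub _ (F a `|` [set x | exists2 i, i \in s & F i x])).
  move=> x [[i]]; rewrite in_cons => /orP[/eqP -> Fx _|iS Fx _]; first by left.
  by right; exists i.
apply: fnegU; first by apply: H; rewrite mem_head.
by apply: IH => i iS; apply: H; rewrite in_cons iS orbT.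
Qed.

Lemma fneg_fin (I : finType) (F : I -> set (d.-tuple R)) :
  (forall i, fneg (F i)) -> fneg [set x | exists i, F i x].
Proof.
move=> H; apply: (@fneg_sub _ [set x | exists2 i, i \in enum I & F i x]).
  by move=> x [[i Fx] _]; exists i; rewrite ?mem_enum.
by apply: fneg_seq => i _; apply: H.
Qed.

Lemma fneg_mu0 X : measurable X -> X `<=` Omega -> fneg X -> mu X = 0.
Proof.
move=> mX XO [N [mN [sN zN]]]; apply: mu_eq0 => //.
rewrite -zN; apply: mu_le => // x Xx; apply: sN; split => //; exact: XO.
Qed.

Lemma fneg_point X Y : ~ fneg X -> fneg Y -> exists x, [/\ X x, Omega x & ~ Y x].
Proof.
move=> nX nY; apply: contrapT => H; apply: nX; apply: fneg_sub nY.
move=> x [Xx Ox]; apply: contrapT => nYx; apply: H; by exists x.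
Qed.

Section Additivity.
Variables (I : eqType) (B : I -> set (d.-tuple R)).
Hypothesis mB : forall i, measurable (B i).
Hypothesis BO : forall i, B i `<=` Omega.
Hypothesis Bov : forall i j, i != j -> fneg (B i `&` B j).

Let U (s : seq I) := [set x | exists2 i, i \in s & B i x].

Lemma U_cons a s : U (a :: s) = B a `|` U s.
Proof.
apply/seteqP; split => x.
  by move=> [i]; rewrite in_cons => /orP[/eqP ->|iS Bx]; [left|right; exists i].
case=> [Bx|[i iS Bx]]; first by exists a; rewrite ?mem_head.
by exists i; rewrite // in_cons iS orbT.
Qed.

Lemma U_meas s : measurable (U s).
Proof.
elim: s => [|a s IH]; first by rewrite (_ : U [::] = set0) //; apply/seteqP; split => x // [].
by rewrite U_cons; apply: measurableU.
Qed.

Lemma U_sub s : U s `<=` Omega.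
Proof. by move=> x [i _ Bx]; apply: (BO Bx). Qed.

Lemma mu_U s : uniq s -> mu (U s) = \sum_(i <- s) mu (B i).
Proof.
elim: s => [|a s IH] /=.
  move=> _; rewrite big_nil (_ : U [::] = set0) ?mu0 //.
  by apply/seteqP; split => x // [].
move=> /andP[aS uS]; rewrite big_cons U_cons -IH //.
have -> : B a `|` U s = B a `|` (U s `\` B a).
  apply/seteqP; split => x.
    case=> [Ax|Bx]; first by left.
    by have [Ax|nAx] := pselect (B a x); [left|right].
  by case=> [Ax|[Bx _]]; [left|right].
rewrite muU //; last 2 first.
- by apply: measurableD => //; exact: U_meas.
- by apply/seteqP; split => x // [? []].
congr (_ + _).
have fO : fneg (U s `&` B a).
  apply: (@fneg_sub _ [set x | exists2 i, i \in s & (B i `&` B a) x]).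
    by move=> x [[[i iS Bix] Bax] _]; exists i.
  apply: fneg_seq => i iS; apply: Bov.
  by apply: contraNneq aS => <-.
have [N [mN [sN zN]]] := fO.
apply/eqP; rewrite eq_le; apply/andP; split.
  apply: mu_le; first (by apply: measurableD => //; exact: U_meas).
    exact: U_meas.
  by move=> x [].
apply: le_trans (_ : mu ((U s `\` B a) `|` N) <= _).
  apply: mu_le => //; [exact: U_meas|apply: measurableU => //; apply: measurableD => //; exact: U_meas|].
  move=> x Ux; have [Bax|nBax] := pselect (B a x); last by left.
  right; apply: sN. split. split. exact: Ux. exact: Bax. exact: (U_sub Ux).
apply: le_trans (mu_subadd _ mN) _.
  by apply: measurableD => //; exact: U_meas.
by rewrite /mu zN adde0.
Qed.

End Additivity.

Hypothesis O1 : fmeas Omega f Omega = 1.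

Lemma mass_prop X : measurable X -> X `<=` Omega ->
  mu X = (mass Omega f X)%:E /\ (0 <= mass Omega f X <= 1)%R.
Proof.
move=> mX XO.
have h0 := mu_ge0 X.
have h1 : mu X <= 1 by rewrite -O1; apply: mu_le.
rewrite /mass -/(mu X).
move: h0 h1; case: (mu X) => [r||] //= h0 h1.
by rewrite -!lee_fin h0 h1.
Qed.

Lemma partition_sum k (B : 'I_k -> set (d.-tuple R)) :
  is_partition Omega f B -> (\sum_(i < k) mass Omega f (B i) = 1)%R.
Proof.
move=> [mB [ov cov]].
have mBi i := (mB i).1.
have BOi i := (mB i).2.
have hU := @mu_U _ B mBi BOi ov (index_enum 'I_k) (index_enum_uniq _).
have -> : (\sum_(i < k) mass Omega f (B i) = fine (\sum_(i <- index_enum 'I_k) mu (B i)))%R.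
  rewrite (eq_bigr (fun i => (mass Omega f (B i))%:E)); last by move=> i _; rewrite (mass_prop (mBi i) (BOi i)).1.
  by rewrite sumEFin.
rewrite -hU.
set U := [set x | _].
have mU : measurable U by apply: U_meas.
have UO : U `<=` Omega by apply: U_sub.
suff -> : mu U = 1 by [].
apply/eqP; rewrite eq_le; apply/andP; split; first by rewrite -O1; apply: mu_le.
have [N [mN [sN zN]]] := cov.
rewrite -O1; apply: le_trans (_ : mu (U `|` N) <= _).
  apply: mu_le => //; first exact: measurableU.
  move=> x Ox; have [Ux|nUx] := pselect (U x); first by left.
  right; apply: sN; split => //; split => //.
  by move=> [i _ Bx]; apply: nUx; exists i; rewrite ?mem_index_enum.
by apply: le_trans (mu_subadd mU mN) _; rewrite /mu zN adde0.
Qed.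

Lemma cost_at k p (xs : 'I_k -> d.-tuple R) (h : 'I_k -> R -> R)
  (A : 'I_k -> set (d.-tuple R)) x i :
  A i x -> (forall l, A l x -> l = i) ->
  cost Omega f p xs h A x = (eucl_dist x (xs i) `^ p + h i (mass Omega f (A i)))%R.
Proof.
move=> Ai H; rewrite /cost (bigD1 i) //= big1 ?addr0.
  by rewrite indicE mem_set // mulr1.
move=> l li; rewrite indicE memNset ?mulr0 //.
by move=> Al; move: li; rewrite (H _ Al) eqxx.
Qed.


Lemma main_lemma k p (xs : 'I_k -> d.-tuple R) (h : 'I_k -> R -> R) :
  (forall i a b, 0 <= a -> a < b -> b <= 1 -> h i a < h i b)%R ->
  forall A, is_equilibrium Omega f p xs h A -> is_pareto_optimum Omega f p xs h A.
Proof.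
move=> hmono A [PA EA]; split => //.
move=> [B [PB [N0 NP]]].
have [mA [ovA covA]] := PA.
have [mB [ovB covB]] := PB.
pose D x i := (eucl_dist x (xs i) `^ p)%R.
pose c i := mass Omega f (A i).
pose b i := mass Omega f (B i).
pose S i := [set x | forall j : 'I_k, j != i -> (D x i + h i (c i) < D x j + h j (c j))%R].
pose E := [set x | exists i, symdiff (A i) (S i) x].
pose OA := [set x | exists ij : 'I_k * 'I_k, ij.1 != ij.2 /\ (A ij.1 `&` A ij.2) x].
pose OB := [set x | exists ij : 'I_k * 'I_k, ij.1 != ij.2 /\ (B ij.1 `&` B ij.2) x].
pose NA := Omega `\` \bigcup_(i in [set: 'I_k]) A i.
pose NB := Omega `\` \bigcup_(i in [set: 'I_k]) B i.
pose N0s := [set x | ~ (cost Omega f p xs h B x <= cost Omega f p xs h A x)%R].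
pose Nbad := N0s `|` E `|` OA `|` OB `|` NA `|` NB.
have fNbad : fneg Nbad.
  apply: fnegU => //; apply: fnegU => //; apply: fnegU; [apply: fnegU; [apply: fnegU => //|]|].
  - by apply: fneg_fin => i; apply: EA.
  - apply: fneg_fin => -[i j] /=; have [ij|nij] := eqVneq i j.
      by apply: fneg_sub fneg0 => x [[]].
    by apply: fneg_sub (ovA _ _ nij) => x [[]].
  - apply: fneg_fin => -[i j] /=; have [ij|nij] := eqVneq i j.
      by apply: fneg_sub fneg0 => x [[]].
    by apply: fneg_sub (ovB _ _ nij) => x [[]].
have good x : Omega x -> ~ Nbad x ->
  [/\ (exists i, A i x), (exists j, B j x),
      ((forall i l, A i x -> A l x -> l = i) /\
      (forall i l, B i x -> B l x -> l = i)),
      (forall i, A i x -> S i x) &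
      (cost Omega f p xs h B x <= cost Omega f p xs h A x)%R].
  move=> Ox nN; split.
  - apply: contrapT => H; apply: nN; left; right; split => //.
    by move=> [i _ Ai]; apply: H; exists i.
  - apply: contrapT => H; apply: nN; right; split => //.
    by move=> [i _ Bi]; apply: H; exists i.
  - split.
    move=> i l Ai Al; apply/eqP; apply: contrapT => /negP nli; apply: nN.
    by do 3 left; right; exists (l, i).
    move=> i l Bi Bl; apply/eqP; apply: contrapT => /negP nli; apply: nN.
    by do 2 left; right; exists (l, i).
  - move=> i Ai; apply: contrapT => nS; apply: nN.
    by do 4 left; right; exists i; left.
  - by apply: contrapT => H; apply: nN; do 5 left.
have mAi i := (mA i).1.
have AOi i := (mA i).2.
have mBi i := (mB i).1.
have BOi i := (mB i).2.
have cp i : (0 <= c i <= 1)%R by exact: (mass_prop (mAi i) (AOi i)).2.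
have bp i : (0 <= b i <= 1)%R by exact: (mass_prop (mBi i) (BOi i)).2.
have step1 j : (b j <= c j)%R.
  have [nj|nnj] := pselect (fneg (B j)).
    have : mu (B j) = 0 by apply: fneg_mu0.
    rewrite (mass_prop (mBi j) (BOi j)).1 => -[bj0].
    by rewrite /b bj0; case/andP: (cp j).
  have [x [Bx Ox nx]] := fneg_point nnj fNbad.
  have [[i Ai] _ [uA uB] SA le] := good x Ox nx.
  rewrite (cost_at p xs h B x Bx (fun l Bl => uB _ _ Bx Bl)) (cost_at p xs h A x Ai (fun l Al => uA _ _ Ai Al)) in le.
  have hle : (h j (b j) <= h j (c j))%R.
    have [ij|nij] := eqVneq i j.
      by rewrite ij in le; rewrite -(lerD2l (D x j)).
    have ji : j != i by rewrite eq_sym.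
    have lt := SA i Ai j ji.
    rewrite -(lerD2l (D x j)); apply: ltW; exact: (le_lt_trans le lt).
  rewrite leNgt; apply/negP => lt.
  have := hmono j (c j) (b j); case/andP: (cp j) => c0 _; case/andP: (bp j) => _ b1.
  by move=> /(_ c0 lt b1); rewrite ltNge hle.
have step2 j : b j = c j.
  have e : (\sum_(i < k) (c i - b i) = 0)%R.
    by rewrite sumrB /c /b !partition_sum // subrr.
  have H0 : forall i, predT i -> (0 <= c i - b i)%R.
    by move=> i _; rewrite subr_ge0 step1.
  have := @psumr_eq0P R _ predT (fun i => (c i - b i)%R) H0 e j isT.
  by move/eqP; rewrite subr_eq0 => /eqP.
apply: NP; apply: fneg_sub fNbad.
move=> x [Px Ox]; apply: contrapT => nx.
have [[i Ai] [j Bj] [uA uB] SA _] := good x Ox nx.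
move: Px; rewrite /= (cost_at p xs h B x Bj (fun l Bl => uB _ _ Bj Bl)).
rewrite (cost_at p xs h A x Ai (fun l Al => uA _ _ Ai Al)).
rewrite -/(b j) step2.
have [ij|nij] := eqVneq i j.
  by rewrite ij ltxx.
have ji : j != i by rewrite eq_sym.
move=> lt2; have := lt_trans (SA i Ai j ji) lt2.
by rewrite ltxx.
Qed.

End MU.

Unset Implicit Arguments.
Theorem corollary4p10 (R : realType) (d k : nat) (Omega : set (d.-tuple R))
  (f : d.-tuple R -> R) (p : R) (xs : 'I_k -> d.-tuple R) (h : 'I_k -> R -> R) :
  measurable Omega ->
  (exists M : R, forall x y, Omega x -> Omega y -> eucl_dist x y <= M) ->
  measurable_fun Omega f ->
  (forall x, Omega x -> 0 <= f x) ->
  fmeas Omega f Omega = 1%E ->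
  1 <= p ->
  (forall i, Omega (xs i)) ->
  (forall i a, 0 <= a <= 1 -> 0 <= h i a) ->
  (forall i a b, 0 <= a -> a < b -> b <= 1 -> h i a < h i b) ->
  forall A : 'I_k -> set (d.-tuple R),
    is_equilibrium Omega f p xs h A -> is_pareto_optimum Omega f p xs h A.
Proof.
move=> mO _ mf f0 O1 _ _ _ hmono A eqA.
exact: (main_lemma mO mf f0 O1 hmono eqA).
Qed.
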